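(* Let $\succeq$ be an inconsistency ranking on $\mathcal{A}$. Then $\succeq$ satisfies positive responsiveness (PR), invariance under inversion of preferences (IIP), homogeneous treatment of entities (HTE), scale invariance (SI), monotonicity (MON) and reducibility (RED) if and only if $\succeq$ equals the Koczkodaj inconsistency ranking $\succeq^K$. In other words, $\succeq^K$ satisfies all six properties, and it is the unique inconsistency ranking on $\mathcal{A}$ that does so.
   Context: A pairwise comparison matrix of size $n$ is a matrix $\mathbf{A}=[a_{ij}]\in\mathbb{R}^{n\times n}$ with all entries positive and $a_{ji}=1/a_{ij}$ for all $i,j$. Let $\mathcal{A}$ denote the set of all pairwise comparison matrices of all sizes $n\ge 3$. For $\mathbf{A}\in\mathcal{A}$ of size $n$ and $3\le m\le n$, a submatrix of $\mathbf{A}$ is a matrix $\mathbf{B}=[b_{ij}]$ of size $m$ with $b_{ij}=a_{\sigma(i)\sigma(j)}$ for some strictly increasing map $\sigma:\{1,\dots,m\}\to\{1,\dots,n\}$. A triad is a pairwise comparison matrix of size $3$; a triad of $\mathbf{A}$ is a submatrix of $\mathbf{A}$ of size $3$ (when $n=3$, $\mathbf{A}$ is its own unique triad). A triad $\mathbf{T}$ is written $\mathbf{T}=(t_1;t_2;t_3)$, meaning $t_{12}=t_1$, $t_{13}=t_2$, $t_{23}=t_3$ (the remaining entries are determined by reciprocity); $\mathbf{T}^\top$ denotes its transpose, i.e. the triad $(1/t_1;1/t_2;1/t_3)$. An inconsistency ranking is a complete and transitive binary relation $\succeq$ on $\mathcal{A}$ ($\mathbf{A}\succeq\mathbf{B}$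 is read ''$\mathbf{A}$ is at most as inconsistent as $\mathbf{B}$''); $\mathbf{A}\sim\mathbf{B}$ means $\mathbf{A}\succeq\mathbf{B}$ and $\mathbf{B}\succeq\mathbf{A}$; $\mathbf{A}\succ\mathbf{B}$ means $\mathbf{A}\succeq\mathbf{B}$ and not $\mathbf{B}\succeq\mathbf{A}$; $\mathbf{A}\preceq\mathbf{B}$ means $\mathbf{B}\succeq\mathbf{A}$. For $\mathbf{A}=[a_{ij}]\in\mathcal{A}$ of size $n$ let $\mu(\mathbf{A})=\max_{1\le i<j<k\le n}\max\{a_{ij}a_{jk}/a_{ik},\ a_{ik}/(a_{ij}a_{jk})\}$. The Koczkodaj inconsistency ranking $\succeq^K$ is defined by $\mathbf{A}\succeq^K\mathbf{B}\iff\mu(\mathbf{A})\le\mu(\mathbf{B})$. Properties of an inconsistency ranking $\succeq$: (PR) for all $s_2,t_2\ge 1$: $(1;s_2;1)\succeq(1;t_2;1)\iff s_2\le t_2$. (IIP) $\mathbf{T}\sim\mathbf{T}^\top$ for every triad $\mathbf{T}$. (HTE) $(1;t_2;t_3)\sim(1;t_2/t_3;1)$ for all $t_2,t_3>0$. (SI) $(t_1;t_2;t_3)\sim(kt_1;k^2t_2;kt_3)$ for all $t_1,t_2,t_3>0$ and all $k>0$. (MON) $\mathbf{A}\preceq\mathbf{T}$ for every $\mathbf{A}\in\mathcal{A}$ and every triad $\mathbf{T}$ of $\mathbf{A}$. (RED) every $\mathbf{A}\in\mathcal{A}$ has a triad $\mathbf{T}$ with $\mathbf{A}\sim\mathbf{T}$.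 *)

(* Defs.v *)
From Stdlib Require Import Reals List Arith.
Import ListNotations.
Open Scope R_scope.

(** A pairwise comparison matrix of size n >= 3, stored as a function
    nat -> nat -> R using 0-based indices 0..n-1.  Entries outside the
    index range are normalised to 1 so that each matrix has a unique
    representation. *)
Record PCM : Type := mkPCM {
  psize : nat;
  pent : nat -> nat -> R;
  psize_ge3 : (3 <= psize)%nat;
  pent_pos : forall i j, (i < psize)%nat -> (j < psize)%nat -> 0 < pent i j;
  pent_recip : forall i j, (i < psize)%nat -> (j < psize)%nat ->
      pent j i = / pent i j;
  pent_out : forall i j, (psize <= i \/ psize <= j)%nat -> pent i j = 1
}.

Definition is_submatrix (B A : PCM) : Prop :=
  (psize B <= psize A)%nat /\
  exists sigma : nat -> nat,
    (forall i j, (i < j)%nat -> (j < psize B)%nat -> (sigma i < sigma j)%nat) /\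
    (forall i, (i < psize B)%nat -> (sigma i < psize A)%nat) /\
    (forall i j, (i < psize B)%nat -> (j < psize B)%nat ->
       pent B i j = pent A (sigma i) (sigma j)).

(** T is the triad (t1;t2;t3): size 3, t12 = t1, t13 = t2, t23 = t3
    (0-based: entries (0,1), (0,2), (1,2)). *)
Definition is_triad (T : PCM) (t1 t2 t3 : R) : Prop :=
  psize T = 3%nat /\ pent T 0 1 = t1 /\ pent T 0 2 = t2 /\ pent T 1 2 = t3.

Definition triad_of (T A : PCM) : Prop :=
  psize T = 3%nat /\ is_submatrix T A.

(** An inconsistency ranking: complete and transitive relation on PCMs.
    rk A B reads "A is at most as inconsistent as B". *)
Definition inconsistency_ranking (rk : PCM -> PCM -> Prop) : Prop :=
  (forall A B, rk A B \/ rk B A) /\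
  (forall A B C, rk A B -> rk B C -> rk A C).

Definition rk_equiv (rk : PCM -> PCM -> Prop) (A B : PCM) : Prop :=
  rk A B /\ rk B A.

Definition tri_val (a : nat -> nat -> R) (i j k : nat) : R :=
  Rmax (a i j * a j k / a i k) (a i k / (a i j * a j k)).

Definition triples (n : nat) : list (nat * nat * nat) :=
  flat_map (fun i => flat_map (fun j => map (fun k => (i, j, k))
      (seq (S j) (n - S j))) (seq (S i) (n - S i))) (seq 0 n).

(** mu(A) = max over i<j<k of tri_val; the fold starts at 1, which is
    harmless since every tri_val is >= 1 and the list is nonempty (n >= 3). *)
Definition mu (A : PCM) : R :=
  fold_right Rmax 1
    (map (fun t => match t with (i, j, k) => tri_val (pent A) i j k end)
         (triples (psize A))).

Definition koczkodaj_ranking (A B : PCM) : Prop := mu A <= mu B.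

Definition PR (rk : PCM -> PCM -> Prop) : Prop :=
  forall (s2 t2 : R) (S T : PCM), 1 <= s2 -> 1 <= t2 ->
    is_triad S 1 s2 1 -> is_triad T 1 t2 1 -> (rk S T <-> s2 <= t2).

Definition IIP (rk : PCM -> PCM -> Prop) : Prop :=
  forall (t1 t2 t3 : R) (T T' : PCM),
    is_triad T t1 t2 t3 -> is_triad T' (/ t1) (/ t2) (/ t3) -> rk_equiv rk T T'.

Definition HTE (rk : PCM -> PCM -> Prop) : Prop :=
  forall (t2 t3 : R) (T T' : PCM), 0 < t2 -> 0 < t3 ->
    is_triad T 1 t2 t3 -> is_triad T' 1 (t2 / t3) 1 -> rk_equiv rk T T'.

Definition SI (rk : PCM -> PCM -> Prop) : Prop :=
  forall (t1 t2 t3 k : R) (T T' : PCM), 0 < t1 -> 0 < t2 -> 0 < t3 -> 0 < k ->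
    is_triad T t1 t2 t3 -> is_triad T' (k * t1) (k * k * t2) (k * t3) ->
    rk_equiv rk T T'.

Definition MON (rk : PCM -> PCM -> Prop) : Prop :=
  forall A T : PCM, triad_of T A -> rk T A.

Definition RED (rk : PCM -> PCM -> Prop) : Prop :=
  forall A : PCM, exists T : PCM, triad_of T A /\ rk_equiv rk A T.

(* Main.v *)
Require Import Defs.
From Stdlib Require Import Reals Lra Lia List Psatz.
Import ListNotations.
Open Scope R_scope.

Lemma in_triples n i j k : (i < j)%nat -> (j < k)%nat -> (k < n)%nat -> In (i,j,k) (triples n).
Proof.
  intros Hij Hjk Hkn. unfold triples.
  apply in_flat_map. exists i. split. apply in_seq. lia.
  apply in_flat_map. exists j. split. apply in_seq; lia.
  apply in_map_iff. exists k. split; [reflexivity| apply in_seq; lia].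
Qed.

Lemma triples_in n t : In t (triples n) ->
  exists i j k, t = (i,j,k) /\ (i<j)%nat /\ (j<k)%nat /\ (k<n)%nat.
Proof.
  unfold triples; intros H.
  apply in_flat_map in H as [i [Hi H]]. apply in_flat_map in H as [j [Hj H]].
  apply in_map_iff in H as [k [Ht Hk]]. apply in_seq in Hi, Hj, Hk.
  exists i, j, k. split; [auto| lia].
Qed.

Lemma fold_Rmax_ge l x : In x l -> x <= fold_right Rmax 1 l.
Proof.
  induction l; simpl; intros H; [contradiction|]. destruct H as [<-|H].
  apply Rmax_l. eapply Rle_trans; [apply IHl; auto| apply Rmax_r].
Qed.

Lemma fold_Rmax_in l : (forall x, In x l -> 1 <= x) -> l <> nil -> In (fold_right Rmax 1 l) l.
Proof.
  induction l as [|a l IH]; intros H Hn; [congruence|]. simpl.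
  destruct l as [|b l'].
  - simpl. left. symmetry. apply Rmax_left. apply H. left; auto.
  - apply (Rmax_case a (fold_right Rmax 1 (b::l')) (fun r => In r (a :: b :: l'))).
    + left; auto.
    + right. apply IH; [intros; apply H; right; auto| discriminate].
Qed.

Lemma max_inv_ge1 u : 0 < u -> 1 <= Rmax u (/u).
Proof.
  intros Hu. destruct (Rle_dec 1 u).
  - eapply Rle_trans; [|apply Rmax_l]; lra.
  - eapply Rle_trans; [|apply Rmax_r].
    apply Rmult_le_reg_l with u; auto. rewrite Rinv_r; lra.
Qed.

Lemma tri_val_ge1 x y z : 0<x->0<y->0<z-> 1 <= Rmax (x*y/z) (z/(x*y)).
Proof.
  intros. replace (z/(x*y)) with (/(x*y/z)) by (field; lra).
  apply max_inv_ge1. apply Rdiv_lt_0_compat; nra.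
Qed.

Lemma tri_val_ge1' (A : PCM) i j k : (i < psize A)%nat -> (j < psize A)%nat -> (k < psize A)%nat ->
  1 <= tri_val (pent A) i j k.
Proof.
  intros. unfold tri_val. apply tri_val_ge1; apply pent_pos; auto.
Qed.

Lemma mu_ge (A : PCM) i j k : (i < j)%nat -> (j < k)%nat -> (k < psize A)%nat ->
  tri_val (pent A) i j k <= mu A.
Proof.
  intros. unfold mu. apply fold_Rmax_ge. apply in_map_iff. exists (i,j,k).
  split; [reflexivity|]. apply in_triples; auto.
Qed.

Lemma mu_attained (A : PCM) : exists i j k, (i<j)%nat /\ (j<k)%nat /\ (k<psize A)%nat /\
  mu A = tri_val (pent A) i j k.
Proof.
  pose proof (psize_ge3 A).
  assert (Hin : In (mu A) (map (fun t => match t with (i, j, k) => tri_val (pent A) i j k end)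
         (triples (psize A)))).
  { unfold mu. apply fold_Rmax_in.
    - intros x Hx. apply in_map_iff in Hx as [t [<- Ht]].
      apply triples_in in Ht as [i [j [k [-> Hs]]]]. apply tri_val_ge1'; lia.
    - intro E. assert (In (tri_val (pent A) 0 1 2) (map (fun t => match t with (i, j, k) => tri_val (pent A) i j k end)
         (triples (psize A)))).
      { apply in_map_iff. exists (0,1,2)%nat. split; auto. apply in_triples; lia. }
      rewrite E in H0. contradiction. }
  apply in_map_iff in Hin as [t [Ht Hi]].
  apply triples_in in Hi as [i [j [k [-> Hs]]]]. exists i, j, k. intuition.
Qed.

Lemma mu3 (T : PCM) : psize T = 3%nat -> mu T = tri_val (pent T) 0 1 2.
Proof.
  intros H. unfold mu. rewrite H.
  change (triples 3) with [(0,1,2)%nat]. cbn [map fold_right].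
  apply Rmax_left. apply tri_val_ge1'; lia.
Qed.

Lemma triad_pos T t1 t2 t3 : is_triad T t1 t2 t3 -> 0 < t1 /\ 0 < t2 /\ 0 < t3.
Proof.
  intros (Hs & H1 & H2 & H3). subst. repeat split; apply pent_pos; lia.
Qed.

Lemma mu_triad T t1 t2 t3 : is_triad T t1 t2 t3 -> mu T = Rmax (t1*t3/t2) (t2/(t1*t3)).
Proof.
  intros (Hs & H1 & H2 & H3). rewrite mu3 by auto. unfold tri_val. subst. reflexivity.
Qed.

Lemma pent_diag (A : PCM) i : (i < psize A)%nat -> pent A i i = 1.
Proof.
  intros Hi. pose proof (pent_recip A i i Hi Hi) as h. pose proof (pent_pos A i i Hi Hi) as p.
  set (x := pent A i i) in *. assert (x * x = 1).
  { rewrite h at 2. apply Rinv_r. lra. }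
  nra.
Qed.

Definition tent (a b c : R) (i j : nat) : R :=
  match i with
  | O => match j with S O => a | S (S O) => b | _ => 1 end
  | S O => match j with O => /a | S (S O) => c | _ => 1 end
  | S (S O) => match j with O => /b | S O => /c | _ => 1 end
  | _ => 1 end.

Lemma tent_pos a b c : 0<a -> 0<b -> 0<c -> forall i j, (i < 3)%nat -> (j < 3)%nat -> 0 < tent a b c i j.
Proof.
  intros. destruct i as [|[|[|i]]]; try lia; destruct j as [|[|[|j]]]; try lia; simpl;
  try apply Rinv_0_lt_compat; auto; lra.
Qed.

Lemma tent_recip a b c : forall i j, (i < 3)%nat -> (j < 3)%nat -> tent a b c j i = / tent a b c i j.
Proof.
  intros. destruct i as [|[|[|i]]]; try lia; destruct j as [|[|[|j]]]; try lia; simpl;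
  first [reflexivity | rewrite Rinv_inv; reflexivity | rewrite Rinv_1; reflexivity].
Qed.

Lemma tent_out a b c : forall i j, (3 <= i \/ 3 <= j)%nat -> tent a b c i j = 1.
Proof.
  intros. destruct i as [|[|[|i]]]; destruct j as [|[|[|j]]]; simpl; try reflexivity; lia.
Qed.

Definition mk_triad a b c (ha : 0<a) (hb : 0<b) (hc : 0<c) : PCM :=
  mkPCM 3 (tent a b c) (Nat.le_refl 3) (tent_pos a b c ha hb hc) (tent_recip a b c) (tent_out a b c).

Lemma mk_triad_is a b c ha hb hc : is_triad (mk_triad a b c ha hb hc) a b c.
Proof. repeat split. Qed.

Lemma sub_triad (A:PCM) i j k : (i<j)%nat -> (j<k)%nat -> (k<psize A)%nat ->
  exists T, triad_of T A /\ is_triad T (pent A i j) (pent A i k) (pent A j k).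
Proof.
  intros Hij Hjk Hk.
  exists (mk_triad _ _ _ (pent_pos A i j ltac:(lia) ltac:(lia))
     (pent_pos A i k ltac:(lia) ltac:(lia)) (pent_pos A j k ltac:(lia) ltac:(lia))).
  split; [|apply mk_triad_is].
  split; [reflexivity|]. split; [simpl; lia|].
  exists (fun t => match t with O => i | S O => j | _ => k end). simpl.
  split; [|split].
  - intros t u Htu Hu. destruct t as [|[|[|t]]]; destruct u as [|[|[|u]]]; simpl; lia.
  - intros t Ht. destruct t as [|[|[|t]]]; simpl; lia.
  - intros t u Ht Hu. destruct t as [|[|[|t]]]; try lia; destruct u as [|[|[|u]]]; try lia; simpl;
    first [reflexivity | symmetry; apply pent_diag; lia | symmetry; apply pent_recip; lia].
Qed.

Lemma triad_of_mu T A : triad_of T A -> exists i j k, (i<j)%nat /\ (j<k)%nat /\ (k<psize A)%nat /\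
  mu T = tri_val (pent A) i j k.
Proof.
  intros (Hs & _ & sg & Hinc & Hr & He).
  exists (sg 0%nat), (sg 1%nat), (sg 2%nat).
  repeat split; try (apply Hinc; lia); try (apply Hr; lia).
  rewrite mu3 by auto. unfold tri_val. rewrite !He by lia. reflexivity.
Qed.

Lemma equiv_trans rk : inconsistency_ranking rk -> forall A B C,
  rk_equiv rk A B -> rk_equiv rk B C -> rk_equiv rk A C.
Proof.
  intros [_ Ht] A B C [H1 H2] [H3 H4]. split; eauto.
Qed.

Lemma triad_self T : psize T = 3%nat -> is_triad T (pent T 0 1) (pent T 0 2) (pent T 1 2).
Proof. intros; repeat split; auto. Qed.

Lemma reduce_triad rk : inconsistency_ranking rk -> IIP rk -> HTE rk -> SI rk ->
  forall T, psize T = 3%nat -> exists S, is_triad S 1 (mu T) 1 /\ rk_equiv rk T S.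
Proof.
  intros Hr HI HH HS T Hs.
  pose proof (triad_self T Hs) as HT.
  destruct (triad_pos _ _ _ _ HT) as (p1 & p2 & p3).
  set (t1 := pent T 0 1) in *. set (t2 := pent T 0 2) in *. set (t3 := pent T 1 2) in *.
  set (k := / t1).
  assert (pk : 0 < k) by (apply Rinv_0_lt_compat; auto).
  assert (q1 : 0 < k * t1) by nra.
  assert (q2 : 0 < k * k * t2) by (apply Rmult_lt_0_compat; nra).
  assert (q3 : 0 < k * t3) by nra.
  set (T1 := mk_triad _ _ _ q1 q2 q3).
  assert (E1 : rk_equiv rk T T1) by (apply (HS t1 t2 t3 k T T1); auto; apply mk_triad_is).
  assert (HT1 : is_triad T1 1 (k*k*t2) (k*t3)).
  { pose proof (mk_triad_is _ _ _ q1 q2 q3) as h. fold T1 in h.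
    replace 1 with (k*t1) at 1 by (unfold k; field; lra). exact h. }
  assert (q4 : 0 < k*k*t2/(k*t3)) by (apply Rdiv_lt_0_compat; auto).
  set (T2 := mk_triad 1 _ 1 Rlt_0_1 q4 Rlt_0_1).
  assert (E2 : rk_equiv rk T1 T2) by (apply (HH (k*k*t2) (k*t3) T1 T2); auto; apply mk_triad_is).
  set (y := k*k*t2/(k*t3)) in *.
  assert (Hmu : mu T = Rmax (/y) y).
  { rewrite (mu_triad _ _ _ _ HT). f_equal; unfold y, k; field; lra. }
  destruct (Rle_dec 1 y) as [Hy|Hy].
  - exists T2. split.
    + rewrite Hmu, Rmax_right. apply mk_triad_is.
      assert (/y <= 1) by (rewrite <- Rinv_1; apply Rinv_le_contravar; lra). lra.
    + eapply equiv_trans; eauto.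
  - assert (r1 : 0 < /1) by (rewrite Rinv_1; lra).
    assert (r2 : 0 < /y) by (apply Rinv_0_lt_compat; lra).
    set (T3 := mk_triad _ _ _ r1 r2 r1).
    assert (E3 : rk_equiv rk T2 T3) by (apply (HI 1 y 1 T2 T3); apply mk_triad_is).
    exists T3. split.
    + rewrite Hmu, Rmax_left.
      * pose proof (mk_triad_is _ _ _ r1 r2 r1) as h. fold T3 in h. rewrite Rinv_1 in h. exact h.
      * assert (1 <= /y) by (rewrite <- Rinv_1; apply Rinv_le_contravar; lra). lra.
    + eapply equiv_trans; eauto. eapply equiv_trans; eauto.
Qed.

Lemma mu_ge1 A : 1 <= mu A.
Proof.
  unfold mu. induction (map _ _); simpl; [lra|]. eapply Rle_trans; [exact IHl| apply Rmax_r].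
Qed.

Lemma triad_cmp rk : inconsistency_ranking rk -> PR rk -> IIP rk -> HTE rk -> SI rk ->
  forall T T', psize T = 3%nat -> psize T' = 3%nat -> (rk T T' <-> mu T <= mu T').
Proof.
  intros Hr HP HI HH HS T T' Hs Hs'.
  destruct (reduce_triad rk Hr HI HH HS T Hs) as [S [HSt [E1 E2]]].
  destruct (reduce_triad rk Hr HI HH HS T' Hs') as [S' [HSt' [E1' E2']]].
  destruct Hr as [_ Htr].
  pose proof (HP _ _ _ _ (mu_ge1 T) (mu_ge1 T') HSt HSt') as hp.
  split.
  - intros h. apply hp. eauto.
  - intros h. apply hp in h. eauto.
Qed.

Theorem theorem1 (rk : PCM -> PCM -> Prop) :
  inconsistency_ranking rk ->
  ((PR rk /\ IIP rk /\ HTE rk /\ SI rk /\ MON rk /\ RED rk) <->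
   (forall A B : PCM, rk A B <-> koczkodaj_ranking A B)).
Proof.
  intros Hr. split.
  - intros (HP & HI & HH & HS & HM & HR).
    assert (Hred : forall A TA, triad_of TA A -> rk_equiv rk A TA -> mu A = mu TA).
    { intros A TA Htr [EA1 EA2].
      destruct (triad_of_mu _ _ Htr) as (i & j & k & h1 & h2 & h3 & HTm).
      destruct (mu_attained A) as (i' & j' & k' & g1 & g2 & g3 & Hm).
      destruct (sub_triad A i' j' k' g1 g2 g3) as [U [HU HUt]].
      assert (HmuU : mu U = mu A) by (rewrite (mu_triad _ _ _ _ HUt), Hm; reflexivity).
      pose proof (HM A U HU) as hUA.
      assert (hUT : rk U TA) by (destruct Hr as [_ Htr']; eauto).
      apply (triad_cmp rk Hr HP HI HH HS) in hUT; [| apply HU | apply Htr].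
      pose proof (mu_ge A i j k h1 h2 h3). lra. }
    intros A B.
    destruct (HR A) as [TA [HA EA]]. destruct (HR B) as [TB [HB EB]].
    unfold koczkodaj_ranking.
    rewrite (Hred A TA HA EA), (Hred B TB HB EB).
    rewrite <- (triad_cmp rk Hr HP HI HH HS TA TB (proj1 HA) (proj1 HB)).
    destruct Hr as [_ Htr]. destruct EA, EB. split; intros; eauto.
  - intros H.
    assert (HE : forall A B, rk_equiv rk A B <-> mu A = mu B).
    { intros A B. unfold rk_equiv. rewrite !H. unfold koczkodaj_ranking. lra. }
    split; [|split; [|split; [|split; [|split]]]].
    + intros s2 t2 S T hs ht HSt HTt. rewrite H. unfold koczkodaj_ranking.
      rewrite (mu_triad _ _ _ _ HSt), (mu_triad _ _ _ _ HTt).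
      assert (Hm : forall s, 1 <= s -> Rmax (1*1/s) (s/(1*1)) = s).
      { intros s hs'. replace (1*1/s) with (/s) by (field; lra).
        replace (s/(1*1)) with s by (field; lra). apply Rmax_right.
        assert (/s <= 1) by (rewrite <- Rinv_1; apply Rinv_le_contravar; lra). lra. }
      rewrite !Hm by auto. lra.
    + intros t1 t2 t3 T T' HT HT'. apply HE.
      destruct (triad_pos _ _ _ _ HT) as (p1 & p2 & p3).
      rewrite (mu_triad _ _ _ _ HT), (mu_triad _ _ _ _ HT'), Rmax_comm.
      f_equal; field; lra.
    + intros t2 t3 T T' h2 h3 HT HT'. apply HE.
      rewrite (mu_triad _ _ _ _ HT), (mu_triad _ _ _ _ HT').
      f_equal; field; lra.
    + intros t1 t2 t3 k T T' h1 h2 h3 hk HT HT'. apply HE.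
      rewrite (mu_triad _ _ _ _ HT), (mu_triad _ _ _ _ HT').
      f_equal; field; lra.
    + intros A T HT. apply H. unfold koczkodaj_ranking.
      destruct (triad_of_mu _ _ HT) as (i & j & k & h1 & h2 & h3 & ->).
      apply mu_ge; auto.
    + intros A. destruct (mu_attained A) as (i & j & k & g1 & g2 & g3 & Hm).
      destruct (sub_triad A i j k g1 g2 g3) as [U [HU HUt]].
      exists U. split; auto. apply HE.
      rewrite (mu_triad _ _ _ _ HUt), Hm. reflexivity.
Qed.
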